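(* Let $G$ be a simple graph with $8$ nodes, $16$ edges and minimum degree $\delta(G)=2$. Then $m_k(K_{4,4})<m_k(G)$ for every $k\in\{5,6,7,8\}$.
   Context: For a graph $H$, $m_k(H)$ denotes the number of edge sets $C\subseteq E(H)$ with $|C|=k$ such that $H-C$ is disconnected (cutsets of cardinality $k$). $K_{4,4}$ is the complete bipartite graph with two parts of size $4$. *)

(* Defs.v *)
From mathcomp Require Import all_boot.
Set Implicit Arguments. Unset Strict Implicit. Unset Printing Implicit Defensive.

Definition simple_graph (V : finType) (e : rel V) : Prop :=
  symmetric e /\ irreflexive e.

Definition edges (V : finType) (e : rel V) : {set {set V}} :=
  [set A : {set V} | [exists x, exists y, e x y && (A == [set x; y])]].

Definition degree (V : finType) (e : rel V) (v : V) : nat := #|[set w | e v w]|.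

Definition min_degree_eq (V : finType) (e : rel V) (d : nat) : Prop :=
  (forall v, d <= degree e v) /\ (exists v, degree e v = d).

Definition connected_edges (V : finType) (F : {set {set V}}) : bool :=
  [forall x, forall y, connect (fun u v => [set u; v] \in F) x y].

Definition m_k (V : finType) (e : rel V) (k : nat) : nat :=
  #|[set C : {set {set V}} | (C \subset edges e) && (#|C| == k)
                              && ~~ connected_edges (edges e :\: C)]|.

Definition K44 : rel 'I_8 := fun x y => (x < 4) != (y < 4).

(* Main.v *)
Require Import Defs.
From mathcomp Require Import all_boot.
From mathcomp Require Import zify.
Set Implicit Arguments. Unset Strict Implicit. Unset Printing Implicit Defensive.


Fixpoint pairs {I : Type} (f : I -> I -> nat) (s : seq I) : nat :=
  if s is x :: t then sumn (map (f x) t) + pairs f t else 0.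

Section Bonf.
Variables (T : finType) (I : Type) (A : I -> {set T}).
Fixpoint U (s : seq I) : {set T} := if s is x :: t then A x :|: U t else set0.

Lemma capU x s : #|A x :&: U s| <= sumn (map (fun j => #|A x :&: A j|) s).
Proof.
elim: s => [|y t IH] /=; first by rewrite setI0 cards0.
rewrite setIUr; apply: leq_trans (leq_card_setU _ _) _.
by rewrite leq_add2l.
Qed.

Lemma bonf s : sumn (map (fun i => #|A i|) s) <= #|U s| + pairs (fun i j => #|A i :&: A j|) s.
Proof.
elim: s => [|x t IH] //=.
have := cardsUI (A x) (U t); have := capU x t; lia.
Qed.
End Bonf.

Lemma sumn_map_le (J : eqType) (f g : J -> nat) s :
  (forall y, y \in s -> f y <= g y) -> sumn (map f s) <= sumn (map g s).
Proof.
elim: s => //= y t IH h; apply: leq_add; first by apply: h; rewrite inE eqxx.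
by apply: IH => z zt; apply: h; rewrite inE zt orbT.
Qed.

Lemma pairs_le (J : eqType) (f g : J -> J -> nat) s : uniq s ->
  (forall x y, x \in s -> y \in s -> x != y -> f x y <= g x y) -> pairs f s <= pairs g s.
Proof.
elim: s => //= x t IH /andP[xt ut] h; apply: leq_add.
  apply: sumn_map_le => y yt; apply: h; rewrite ?inE ?eqxx ?yt ?orbT //.
  by apply/eqP => xy; subst; rewrite yt in xt.
apply: IH => // a b at_ bt; apply: h; rewrite inE ?at_ ?bt orbT //.
Qed.

Lemma pairs_map (J K : Type) (d : J -> K) (f : K -> K -> nat) s :
  pairs (fun x y => f (d x) (d y)) s = pairs f (map d s).
Proof. by elim: s => //= x t ->; rewrite -map_comp. Qed.

Definition tbl := [:: 12870; 6435; 3003; 1287; 495; 165; 45; 9; 1].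
Definition Bt (s : nat) : nat := nth 0 tbl s.
Definition H a b := Bt (a + b - 1).

Lemma Bt_bin s : s <= 8 -> 'C(16 - s, 8 - s) = Bt s.
Proof.
have : all (fun s => 'C(16 - s, 8 - s) == Bt s) (iota 0 9) by vm_compute.
by move=> /allP h hs; apply/eqP; apply: h; rewrite mem_iota.
Qed.

Lemma Bt_big s : 8 < s -> Bt s = 0.
Proof. by move=> h; rewrite /Bt nth_default. Qed.

Lemma Bt_anti s s' : s <= s' -> Bt s' <= Bt s.
Proof.
move=> hs; have [h|h] := leqP s' 8; last by rewrite Bt_big.
have : all (fun s' => all (fun s => Bt s' <= Bt s) (iota 0 s'.+1)) (iota 0 9) by vm_compute.
move=> /allP X.
have /allP Y : all (fun s => Bt s' <= Bt s) (iota 0 s'.+1) by apply: X; rewrite mem_iota /=; lia.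
by apply: Y; rewrite mem_iota /=; lia.
Qed.

Section Gen.
Variables (V : finType) (e : rel V).
Hypothesis he : simple_graph e.

Lemma symE x y : e x y = e y x.
Proof. by case: he => s _; rewrite s. Qed.
Lemma irrE x : e x x = false.
Proof. by case: he => _ i; rewrite i. Qed.

Lemma in_edges A : (A \in edges e) = [exists x, exists y, e x y && (A == [set x; y])].
Proof. by rewrite inE. Qed.

Lemma edge2 u w : [set u; w] \in edges e -> u != w -> e u w.
Proof.
rewrite in_edges => /existsP[a /existsP[b /andP[eab /eqP h]]] nuw.
have ha : u \in [set a; b] by rewrite -h set21.
have hb : w \in [set a; b] by rewrite -h set22.
move: ha hb; rewrite !inE => /orP[] /eqP ua /orP[] /eqP wb; subst.
- by rewrite eqxx in nuw.
- done.
- by rewrite symE.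
- by rewrite eqxx in nuw.
Qed.

Lemma edge_in u w : e u w -> [set u; w] \in edges e.
Proof. by move=> h; rewrite in_edges; apply/existsP; exists u; apply/existsP; exists w; rewrite h eqxx. Qed.

Definition Ev x : {set {set V}} := [set [set x; y] | y in [set y | e x y]].

Lemma in_Ev x A : (A \in Ev x) = (A \in edges e) && (x \in A).
Proof.
apply/imsetP/andP => [[y]|[]].
  by rewrite inE => exy ->; split; [exact: edge_in | exact: set21].
rewrite in_edges => /existsP[a /existsP[b /andP[eab /eqP ->]]].
rewrite !inE => /orP[] /eqP ->.
  by exists b; rewrite ?inE.
by exists a; rewrite ?inE 1?setUC // symE.
Qed.

Lemma Ev_sub x : Ev x \subset edges e.
Proof. by apply/subsetP => A; rewrite in_Ev => /andP[]. Qed.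

Lemma card_Ev x : #|Ev x| = degree e x.
Proof.
rewrite /Ev card_in_imset // => y1 y2; rewrite !inE => h1 h2 h.
have : y1 \in [set x; y2] by rewrite -h set22.
rewrite !inE => /orP[] /eqP // E; subst.
by rewrite irrE in h1.
Qed.

Lemma card_EvI x y : x != y -> #|Ev x :&: Ev y| <= 1.
Proof.
move=> nxy; rewrite -(cards1 [set x; y]); apply: subset_leq_card.
apply/subsetP => A; rewrite !inE !in_Ev => /andP[/andP[hA xA] /andP[_ yA]].
move: hA; rewrite in_edges => /existsP[a /existsP[b /andP[eab /eqP E]]]; subst A.
move: xA yA; rewrite !inE => /orP[] /eqP xa /orP[] /eqP yb; subst.
- by rewrite eqxx in nxy.
- by [].
- by rewrite setUC.
- by rewrite eqxx in nxy.
Qed.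

Lemma isolate x (C : {set {set V}}) : 1 < #|V| -> Ev x \subset C -> ~~ connected_edges (edges e :\: C).
Proof.
move=> hV hsub; apply/negP => /forallP /(_ x) hc.
have [y nyx] : exists y, y != x.
  have : 0 < #|[set~ x]| by rewrite cardsC1; lia.
  by case/card_gt0P => y; rewrite !inE => ?; exists y.
have := forallP hc y.
have cl : closed (fun u v => [set u; v] \in edges e :\: C) (pred1 x).
  move=> u w; rewrite in_setD => /andP[nC hE]; rewrite !inE.
  have key : forall a b, [set a; b] \in edges e -> [set a; b] \notin C -> a = x -> b = x.
    move=> a b hab nab ax; apply/eqP/negPn/negP => bx; subst a.
    have : [set x; b] \in Ev x by rewrite in_Ev hab set21.
    by move/(subsetP hsub); rewrite (negbTE nab).
  apply/idP/idP => /eqP h; apply/eqP; first exact: (key u w hE nC h).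
  by apply: (key w u) => //; rewrite setUC.
move/(closed_connect cl); rewrite !inE eqxx => /esym /eqP yx.
by rewrite yx eqxx in nyx.
Qed.

Definition Aset k (S : {set {set V}}) := [set C : {set {set V}} | (C \subset edges e) && (#|C| == k) && (S \subset C)].
Definition Mset k := [set C : {set {set V}} | (C \subset edges e) && (#|C| == k)
                              && ~~ connected_edges (edges e :\: C)].
Lemma m_kE k : m_k e k = #|Mset k|. Proof. by []. Qed.

Lemma AsetM k x : 1 < #|V| -> Aset k (Ev x) \subset Mset k.
Proof.
move=> hV; apply/subsetP => C; rewrite !inE => /andP[/andP[-> ->] h] /=.
exact: (isolate hV h).
Qed.

Lemma AsetI k (S T : {set {set V}}) : Aset k S :&: Aset k T = Aset k (S :|: T).
Proof.
apply/setP => C; rewrite !inE subUset.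
by case: (C \subset _); case: (#|C| == k); case: (S \subset C).
Qed.

Lemma Aset_big k (S : {set {set V}}) : k < #|S| -> Aset k S = set0.
Proof.
move=> h; apply/setP => C; rewrite !inE.
apply/negP => /andP[/andP[_ /eqP hC] hS].
by have := subset_leq_card hS; lia.
Qed.

Lemma card_Aset k (S : {set {set V}}) : S \subset edges e -> #|S| <= k ->
  #|Aset k S| = 'C(#|edges e| - #|S|, k - #|S|).
Proof.
move=> hS hk.
have -> : #|edges e| - #|S| = #|edges e :\: S|.
  by rewrite cardsD (setIidPr hS).
rewrite -cards_draws.
have E : Aset k S = [set B :|: S | B in [set B : {set {set V}} | (B \subset edges e :\: S) & (#|B| == k - #|S|)]].
  apply/setP => C; rewrite inE; apply/idP/imsetP.
    move=> /andP[/andP[hC /eqP hk'] hSC]; exists (C :\: S).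
      rewrite inE; apply/andP; split; first exact: setSD.
      by rewrite cardsD (setIidPr hSC) hk'.
    apply/setP => A; rewrite !inE; case AS: (A \in S); last by rewrite /= orbF.
    by rewrite (subsetP hSC).
  move=> [B]; rewrite inE => /andP[hB /eqP hkB] ->.
  have dj : B :&: S = set0.
    apply/setP => A; rewrite !inE; apply/negP => /andP[AB AS].
    by have := subsetP hB A AB; rewrite !inE AS.
  apply/andP; split; first (apply/andP; split).
  - by rewrite subUset hS andbT; apply: (subset_trans hB); apply: subsetDl.
  - by rewrite cardsU dj cards0 subn0 hkB subnK.
  - exact: subsetUr.
rewrite E card_in_imset // => B1 B2; rewrite !inE => /andP[h1 _] /andP[h2 _] h.
apply/setP => A; move/setP: h => /(_ A); rewrite !inE.
case AS: (A \in S); last by rewrite !orbF.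
have := subsetP h1 A; have := subsetP h2 A; rewrite !inE AS /=.
move=> H2 H1 _.
have n1 : (A \in B1) = false by apply/negP => /H1.
have n2 : (A \in B2) = false by apply/negP => /H2.
by rewrite n1 n2.
Qed.


Section LB.
Hypothesis hE16 : #|edges e| = 16.
Hypothesis hV : 1 < #|V|.

Lemma cardA8 (S : {set {set V}}) : S \subset edges e -> #|Aset 8 S| = Bt #|S|.
Proof.
move=> hS; have [h|h] := leqP #|S| 8.
  by rewrite card_Aset // hE16 Bt_bin.
by rewrite Aset_big // cards0 Bt_big.
Qed.

Fixpoint Useq (s : seq V) : {set {set {set V}}} :=
  if s is x :: t then Aset 8 (Ev x) :|: Useq t else set0.

Lemma Useq_U s : Useq s = U (fun x => Aset 8 (Ev x)) s.
Proof. by elim: s => //= x t ->. Qed.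

Lemma Useq_M s : Useq s \subset Mset 8.
Proof. by elim: s => [|x t IH] /=; [exact: sub0set | rewrite subUset IH AsetM]. Qed.

Lemma LB (s : seq V) : uniq s ->
  sumn (map Bt (map (degree e) s)) <= m_k e 8 + pairs H (map (degree e) s).
Proof.
move=> us.
have h1 : sumn (map Bt (map (degree e) s)) = sumn (map (fun x => #|Aset 8 (Ev x)|) s).
  rewrite -map_comp; congr sumn; apply: eq_map => x /=.
  by rewrite cardA8 ?card_Ev // Ev_sub.
have h2 := bonf (fun x => Aset 8 (Ev x)) s.
have h3 : #|U (fun x => Aset 8 (Ev x)) s| <= m_k e 8.
  by rewrite -Useq_U m_kE; apply: subset_leq_card; apply: Useq_M.
have h4 : pairs (fun i j => #|Aset 8 (Ev i) :&: Aset 8 (Ev j)|) s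
          <= pairs (fun x y => H (degree e x) (degree e y)) s.
  apply: pairs_le => // x y _ _ nxy.
  rewrite AsetI cardA8; last by rewrite subUset !Ev_sub.
  apply: Bt_anti.
  have := card_EvI nxy; rewrite cardsU !card_Ev; lia.
rewrite -pairs_map in h4 *; lia.
Qed.
End LB.

Lemma handshake : \sum_x degree e x = 2 * #|edges e|.
Proof.
have E1 : forall x, degree e x = \sum_(A in edges e) (x \in A : nat).
  move=> x; rewrite -card_Ev -sum1_card big_mkcond /= [RHS]big_mkcond /=.
  by apply: eq_bigr => A _; rewrite in_Ev; case: (A \in edges e); case: (x \in A).
rewrite (eq_bigr _ (fun x _ => E1 x)) exchange_big /=.
rewrite (eq_bigr (fun _ => 2)); first by rewrite sum_nat_const mulnC.
move=> A; rewrite in_edges => /existsP[a /existsP[b /andP[eab /eqP ->]]].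
have nab : a != b by apply/eqP => ab; subst; rewrite irrE in eab.
transitivity #|[set a; b]|; last by rewrite cards2 nab.
rewrite -sum1_card [RHS]big_mkcond /=.
by apply: eq_bigr => x _; case: (x \in _).
Qed.

End Gen.

Definition rng := iota 3 5.
Definition P (ds : seq nat) :=
  if sumn ds == 30 then 4446 + pairs H (2 :: ds) < sumn (map Bt (2 :: ds)) else true.
Fixpoint chk n (acc : seq nat) s := if n is n'.+1 then
  all (fun x => if (x + s + 3 * n' <= 30) && (30 <= x + s + 7 * n') then chk n' (x :: acc) (x + s) else true) rng
  else P acc.

Lemma sum_rng l : all (fun x => x \in rng) l -> 3 * size l <= sumn l /\ sumn l <= 7 * size l.
Proof.
elim: l => //= x l IH /andP[hx /IH]; rewrite mem_iota in hx; lia.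
Qed.

Lemma chk_ok n acc l : chk n acc (sumn acc) -> size l = n -> all (fun x => x \in rng) l -> P (catrev l acc).
Proof.
elim: n acc l => [|n IH] acc [|x l] // hc [hs] /andP[hx hl].
have := allP hc x hx; rewrite -/(chk n (x :: acc) (x + sumn acc)); case: ifP => c.
  by move=> h; apply: (IH (x :: acc)).
move=> _; rewrite /P; case: ifP => // /eqP hsum; exfalso.
move: hsum; rewrite catrevE sumn_cat sumn_rev /= => hsum.
have := sum_rng hl; rewrite hs => hb.
move/negbT: c; rewrite negb_and -!ltnNge => /orP[] c; lia.
Qed.

Lemma checkP : chk 7 [::] 0.
Proof. by vm_compute. Qed.

Definition edn (n : nat) : {set 'I_8} := [set inord (n %/ 4); inord (4 + n %% 4)].
Definition phi (C : {set {set 'I_8}}) : seq bool := mkseq (fun n => edn n \in C) 16.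
Definition step (L : seq nat) a b :=
  let la := nth 0 L a in let lb := nth 0 L b in [seq if y == la then lb else y | y <- L].
Definition ufg (bs : seq bool) (L : seq nat) n := if nth false bs n then L else step L (n %/ 4) (4 + n %% 4).
Definition uf bs := foldl (ufg bs) (iota 0 8) (iota 0 16).
Definition conn bs := let L := uf bs in all (fun y => y == nth 0 L 0) L.
Fixpoint combs n k : seq (seq bool) := if n is n'.+1 then
  (if k is k'.+1 then map (cons true) (combs n' k') else [::]) ++ map (cons false) (combs n' k)
  else if k is 0 then [:: [::]] else [::].

Lemma combs_complete n k s : size s = n -> count id s = k -> s \in combs n k.
Proof.
elim: n k s => [|n IH] k [|b s] //=; first by move=> _ <-.
move=> [hs] hk; rewrite mem_cat; apply/orP.
case: b hk => /= hk.
  by left; subst k; apply: map_f; apply: IH.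
by right; apply: map_f; apply: IH; rewrite // -hk.
Qed.

Lemma edn_edges n : n < 16 -> edn n \in edges K44.
Proof.
move=> hn; rewrite inE; apply/existsP; exists (inord (n %/ 4)); apply/existsP; exists (inord (4 + n %% 4)).
by rewrite eqxx andbT /K44 !inordK; lia.
Qed.

Lemma edn_val (x y : 'I_8) : x < 4 -> 4 <= y -> edn (x * 4 + (y - 4)) = [set x; y].
Proof.
move=> hx hy; have := ltn_ord x; have := ltn_ord y => y8 x8.
rewrite /edn; congr [set _; _]; apply/val_inj; rewrite /= inordK; lia.
Qed.

Lemma edges_edn A : A \in edges K44 -> exists2 n, n < 16 & A = edn n.
Proof.
rewrite inE => /existsP[x /existsP[y /andP[hxy /eqP ->]]].
move: hxy; rewrite /K44.
have hx8 := ltn_ord x; have hy8 := ltn_ord y.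
case: (ltnP x 4) => hx; case: (ltnP y 4) => hy //= _.
  by exists (x * 4 + (y - 4)); [lia | rewrite edn_val].
by exists (y * 4 + (x - 4)); [lia | rewrite setUC edn_val].
Qed.

Lemma edn_inj n m : n < 16 -> m < 16 -> edn n = edn m -> n = m.
Proof.
move=> hn hm h.
have h1 : inord (n %/ 4) \in edn m by rewrite -h set21.
have h2 : inord (4 + n %% 4) \in edn m by rewrite -h set22.
move: h1 h2; rewrite !inE => /orP[] /eqP /(congr1 val) /= e1 /orP[] /eqP /(congr1 val) /= e2;
  move: e1 e2; rewrite !inordK; lia.
Qed.

Lemma phi_inj (C1 C2 : {set {set 'I_8}}) : C1 \subset edges K44 -> C2 \subset edges K44 -> phi C1 = phi C2 -> C1 = C2.
Proof.
move=> h1 h2 h; apply/setP => A.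
case hA: (A \in edges K44).
  have [n hn ->] := edges_edn hA.
  have := congr1 (fun s => nth false s n) h; rewrite /phi /= !nth_mkseq //.
apply/idP/idP => hh; [have := subsetP h1 A hh | have := subsetP h2 A hh]; by rewrite hA.
Qed.

Lemma count_phi (C : {set {set 'I_8}}) : C \subset edges K44 -> count id (phi C) = #|C|.
Proof.
move=> hC.
have E : C =i map edn (filter (fun n => edn n \in C) (iota 0 16)).
  move=> A; apply/idP/mapP => [hA | [n] ].
    have [n hn eA] := edges_edn (subsetP hC A hA).
    by exists n => //; rewrite mem_filter mem_iota -eA hA /=.
  by rewrite mem_filter => /andP[h _] ->.
have U : uniq (map edn (filter (fun n => edn n \in C) (iota 0 16))).
  rewrite map_inj_in_uniq ?filter_uniq ?iota_uniq // => a b.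
  rewrite !mem_filter !mem_iota => /andP[_ ha] /andP[_ hb]; apply: edn_inj; lia.
rewrite (eq_card E) (card_uniqP U) size_map size_filter /phi /mkseq count_map.
by apply: eq_count.
Qed.

Section Conn.
Variable C : {set {set 'I_8}}.
Definition R : rel 'I_8 := fun u v => [set u; v] \in edges K44 :\: C.
Lemma R_sym : symmetric R. Proof. by move=> u v; rewrite /R setUC. Qed.
Definition Inv (L : seq nat) := size L = 8 /\
  forall x, x < 8 -> nth 0 L x < 8 /\ connect R (inord x) (inord (nth 0 L x)).

Lemma step_ok L a b : Inv L -> a < 8 -> b < 8 -> R (inord a) (inord b) -> Inv (step L a b).
Proof.
move=> [hs hL] ha hb hab; split; first by rewrite size_map.
move=> x hx; rewrite (nth_map 0); last by rewrite hs.
have [lx cx] := hL x hx; have [la ca] := hL a ha; have [lb cb] := hL b hb.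
case: eqP => // E; split => //.
apply: (connect_trans cx); rewrite E.
have c1 : connect R (inord (nth 0 L a)) (inord a) by rewrite (sym_connect_sym R_sym).
have c2 : connect R (inord a) (inord b) by apply: connect1.
exact: connect_trans c1 (connect_trans c2 cb).
Qed.

Lemma fold_ok l L : all (fun n => n < 16) l -> Inv L -> Inv (foldl (ufg (phi C)) L l).
Proof.
elim: l L => //= n l IH L /andP[hn hl] hI; apply: IH => //.
rewrite /ufg /phi nth_mkseq //; case: ifP => // hC.
apply: step_ok => //; try lia.
by rewrite /R in_setD hC edn_edges.
Qed.

Lemma conn_ok : conn (phi C) -> connected_edges (edges K44 :\: C).
Proof.
have I0 : Inv (iota 0 8).
  split; first by rewrite size_iota.
  move=> x hx; rewrite nth_iota // add0n; split => //; exact: connect0.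
have [hs hI] := fold_ok (l := iota 0 16) (is_true_true : all (fun n => n < 16) (iota 0 16)) I0.
rewrite /conn -/(uf (phi C)) /uf => /allP hall.
have key : forall x : 'I_8, connect R x (inord (nth 0 (uf (phi C)) 0)).
  move=> x; have [lx cx] := hI x (ltn_ord x).
  have := hall _ (mem_nth 0 (_ : x < size (uf (phi C)))); rewrite /uf hs => /(_ (ltn_ord x)) /eqP E.
  by move: cx; rewrite inord_val E.
apply/forallP => x; apply/forallP => y.
apply: connect_trans (key x) _; rewrite (sym_connect_sym R_sym); exact: key.
Qed.
End Conn.

Lemma K44_bound k : m_k K44 k <= count (fun bs => ~~ conn bs) (combs 16 k).
Proof.
rewrite /m_k cardE -(size_map phi) -size_filter; apply: uniq_leq_size.
  rewrite map_inj_in_uniq ?enum_uniq // => C1 C2.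
  rewrite !mem_enum !inE => /andP[/andP[h1 _] _] /andP[/andP[h2 _] _]; exact: phi_inj.
move=> bs /mapP[C]; rewrite mem_enum inE => /andP[/andP[hC /eqP hk] hnc] ->.
rewrite mem_filter combs_complete ?size_mkseq ?count_phi // andbT.
by apply/negP => /conn_ok; apply/negP.
Qed.

Lemma sumdeg (V : finType) (f : V -> nat) : sumn (map f (enum V)) = \sum_x f x.
Proof. by rewrite sumnE big_map big_enum. Qed.

Lemma K44_5 : count (fun bs => ~~ conn bs) (combs 16 5) = 96. Proof. by vm_compute. Qed.
Lemma K44_6 : count (fun bs => ~~ conn bs) (combs 16 6) = 544. Proof. by vm_compute. Qed.
Lemma K44_7 : count (fun bs => ~~ conn bs) (combs 16 7) = 1888. Proof. by vm_compute. Qed.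
Lemma K44_8 : count (fun bs => ~~ conn bs) (combs 16 8) = 4446. Proof. by vm_compute. Qed.

Unset Implicit Arguments.
Theorem mainTheorem5 (V : finType) (e : rel V) :
  simple_graph e -> #|V| = 8 -> #|edges e| = 16 -> min_degree_eq e 2 ->
  forall k, 5 <= k <= 8 -> m_k K44 k < m_k e k.
Proof.
move=> he hV hE [hmin [v hv]] k hk.
have hV1 : 1 < #|V| by rewrite hV.
have lowk : forall k, 2 <= k -> 'C(14, k - 2) <= m_k e k.
  move=> k' hk'; rewrite m_kE; apply: leq_trans (subset_leq_card (AsetM he k' v hV1)).
  have c2 : #|Ev e v| = 2 by rewrite card_Ev.
  rewrite (card_Aset (Ev_sub he v)) c2 ?hE //.
have : k = 5 \/ k = 6 \/ k = 7 \/ k = 8 by lia.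
case=> [->|[->|[->|->]]].
- by apply: leq_ltn_trans (K44_bound 5) _; rewrite K44_5; apply: leq_trans (lowk 5 isT).
- by apply: leq_ltn_trans (K44_bound 6) _; rewrite K44_6; apply: leq_trans (lowk 6 isT).
- by apply: leq_ltn_trans (K44_bound 7) _; rewrite K44_7; apply: leq_trans (lowk 7 isT).
apply: leq_ltn_trans (K44_bound 8) _; rewrite K44_8.
have d7 : forall x, degree e x <= 7.
  move=> x; have sub : [set w | e x w] \subset [set~ x].
    by apply/subsetP => w; rewrite !inE; apply: contraTN => /eqP ->; rewrite irrE.
  by apply: leq_trans (subset_leq_card sub) _; rewrite cardsC1 hV.
case: (boolP [exists w, (w != v) && (degree e w == 2)]) => [/existsP[w /andP[wv /eqP dw]] | nw].
  have := LB he hE hV1 (s := [:: v; w]); rewrite /= inE eq_sym wv hv dw => /(_ isT) h.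
  have h' : 3003 + 3003 <= m_k e 8 + 1287 := h.
  lia.
have vin : v \in enum V by rewrite mem_enum.
set ds := map (degree e) (rem v (enum V)).
have nw' : forall x, x \in rem v (enum V) -> 3 <= degree e x.
  move=> x; rewrite (mem_rem_uniq _ (enum_uniq V)) !inE => /andP[xv _].
  have := hmin x; move: nw; rewrite negb_exists => /forallP /(_ x).
  rewrite xv /= => /eqP; lia.
have hP : P ds.
  have -> : ds = catrev (rev ds) [::] by rewrite catrevE revK cats0.
  apply: chk_ok checkP _ _; first by rewrite size_rev size_map size_rem // -cardT hV.
  rewrite all_rev all_map; apply/allP => x hx /=; rewrite mem_iota.
  have := nw' x hx; have := d7 x; lia.
have hsum : sumn ds = 30.
  have := handshake he; rewrite hE -sumdeg (perm_sumn (perm_map _ (perm_to_rem vin))) /= hv.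
  rewrite -/ds; lia.
move: hP; rewrite /P hsum eqxx => hP.
have us : uniq (v :: rem v (enum V)) by rewrite /= mem_rem_uniqF ?rem_uniq ?enum_uniq.
have E : map (degree e) (v :: rem v (enum V)) = 2 :: ds by rewrite /= hv.
have := LB he hE hV1 us; rewrite E; lia.
Qed.
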